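(* Under the mixed membership model with Conditions (C1) and (C2), $\max_{1\le k\le K}\|\mathbf v_k\|_\infty=O(n^{-1/2})$. The same conclusion holds under the degree-corrected mixed membership model with Conditions (C1) and (C4).
   Context: $n$ nodes, $K$ fixed; $\mathbf X$ symmetric binary adjacency matrix (independent Bernoulli entries on/above the diagonal, possibly with zeroed diagonal) with mean structure $\mathbf H$, $\mathbf W=\mathbf X-\mathbf H$, $\alpha_n=\{\max_m\sum_l\mathrm{var}(w_{lm})\}^{1/2}$. DCMM model: $\mathbf H=\boldsymbol\Theta\boldsymbol\Pi\mathbf P\boldsymbol\Pi^T\boldsymbol\Theta$, $\boldsymbol\Theta=\mathrm{diag}(\theta_1,\dots,\theta_n)$, $\theta_l>0$, $\theta_{\max},\theta_{\min}$ max/min; rows $\boldsymbol\pi_l$ of $\boldsymbol\Pi\in\mathbb R^{n\times K}$ probability vectors; $\mathbf P\in[0,1]^{K\times K}$ nonsingular; $\operatorname{rank}\mathbf H=K$. Mixed membership model: $\boldsymbol\Theta=\sqrt\theta\mathbf I_n$, i.e. $\mathbf H=\theta\boldsymbol\Pi\mathbf P\boldsymbol\Pi^T$. $\mathcal N_k=\{l:\boldsymbol\pi_l(k)=1\}$. $\mathbf H=\mathbf V\mathbf D\mathbf V^T$ with $\mathbf D=\mathrm{diag}(d_1,\dots,d_K)$, $|d_1|\ge\dots\ge|d_K|>0$, $\mathbf V=(\mathbf v_1,\dots,\mathbf v_K)$ orthonormal. (C1): constant $c_0>0$, $\min\{|d_a|/|d_b|:a<b,\ d_a\ne-d_b\}\ge1+c_0$,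 $\alpha_n\to\infty$. (C2): constants $0<c_0,c_1<1$: $\lambda_K(\boldsymbol\Pi^T\boldsymbol\Pi)\ge c_0n$, $\lambda_K(\mathbf P)\ge c_0$, $\theta\ge n^{-c_1}$. (C4): constants $c_2,c_3\in(0,1)$, $c_4>0$: $\min_k|\mathcal N_k|\ge c_2n$, $\theta_{\max}\le c_4\theta_{\min}$, $\theta_{\min}^2\ge n^{-c_3}$. *)

(* Defs.v *)
From mathcomp Require Import all_boot all_order all_algebra.
From mathcomp Require Import all_classical all_reals all_analysis.
Set Implicit Arguments. Unset Strict Implicit. Unset Printing Implicit Defensive.
Import Order.TTheory GRing.Theory Num.Theory.
Import numFieldNormedType.Exports.
Local Open Scope classical_set_scope.
Local Open Scope ring_scope.

Section Defs.
Variable R : realType.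

Definition prob_rows (n K : nat) (Pi : 'M[R]_(n, K)) : Prop :=
  forall l : 'I_n, (forall k, 0 <= Pi l k) /\ \sum_(k < K) Pi l k = 1.

Definition entries01 (m n : nat) (A : 'M[R]_(m, n)) : Prop :=
  forall i j, 0 <= A i j <= 1.

Definition dcmm_mean (n K : nat) (theta : 'rV[R]_n) (Pi : 'M[R]_(n, K))
  (P : 'M[R]_K) : 'M[R]_n :=
  diag_mx theta *m Pi *m P *m Pi^T *m diag_mx theta.

Definition mm_mean (n K : nat) (theta : R) (Pi : 'M[R]_(n, K))
  (P : 'M[R]_K) : 'M[R]_n :=
  theta *: (Pi *m P *m Pi^T).

Definition mean_ok (n K : nat) (H : 'M[R]_n) (P : 'M[R]_K) : Prop :=
  [/\ entries01 P, P \in unitmx, entries01 H & \rank H = K].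

Definition eig_decomp (n K : nat) (H : 'M[R]_n) (V : 'M[R]_(n, K))
  (d : 'rV[R]_K) : Prop :=
  [/\ H = V *m diag_mx d *m V^T,
      V^T *m V = 1%:M,
      (forall a b : 'I_K, (a <= b)%N -> `|d 0 b| <= `|d 0 a|) &
      (forall a : 'I_K, 0 < `|d 0 a|)].

(* var(w_lm) for X_lm ~ Bernoulli(h_lm) independent (l <= m), symmetric;
   if the diagonal is zeroed (zdiag = true), X_ll = 0 and var(w_ll) = 0 *)
Definition var_w (n : nat) (H : 'M[R]_n) (zdiag : bool) (l m : 'I_n) : R :=
  if zdiag && (l == m) then 0 else H l m * (1 - H l m).

Definition alpha (n : nat) (H : 'M[R]_n) (zdiag : bool) : R :=
  Num.sqrt (\big[Num.max/0]_(m < n) \sum_(l < n) var_w H zdiag l m).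

(* lambda_K(A) >= c for a symmetric K x K matrix A: its smallest eigenvalue
   (all eigenvalues being real) is at least c *)
Definition lambdaK_ge (K : nat) (A : 'M[R]_K) (c : R) : Prop :=
  forall a : R, eigenvalue A a -> c <= a.

Definition cond_C1 (K : nat) (c0 : R) (n0 : nat) (d : forall n : nat, 'rV[R]_K)
  (alpha_seq : nat -> R) : Prop :=
  [/\ 0 < c0,
      (forall n, (n0 <= n)%N -> forall a b : 'I_K, (a < b)%N ->
         d n 0 a != - d n 0 b -> 1 + c0 <= `|d n 0 a| / `|d n 0 b|) &
      alpha_seq @ \oo --> +oo].

Definition pure_nodes (n K : nat) (Pi : 'M[R]_(n, K)) (k : 'I_K) : {set 'I_n} :=
  [set l | Pi l k == 1].

End Defs.

(* Main.v *)
Require Import Defs.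
From mathcomp Require Import all_boot all_order all_algebra.
From mathcomp Require Import all_classical all_reals all_analysis.
From mathcomp Require Import ring lra.
Import Order.TTheory GRing.Theory Num.Theory.
Set Implicit Arguments. Unset Strict Implicit.
Local Open Scope ring_scope.

Section Psd.
Variable R : realType.

Definition bil (K : nat) (M : 'M[R]_K) (u x : 'rV[R]_K) : R := (u *m M *m x^T) 0 0.

Lemma bilE K (M : 'M[R]_K) u x : bil M u x = \sum_i \sum_j u 0 i * M i j * x 0 j.
Proof.
rewrite /bil mxE exchange_big /=; apply: eq_bigr => j _; rewrite mxE mulr_suml.
by apply: eq_bigr => i _; rewrite !mxE.
Qed.

Lemma bil_sym K (M : 'M[R]_K) u x : M^T = M -> bil M x u = bil M u x.
Proof.
move=> sM; rewrite /bil; transitivity ((x *m M *m u^T)^T 0 0); first by rewrite [RHS]mxE.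
by rewrite !trmx_mul trmxK sM mulmxA.
Qed.

Lemma bilDl K (M : 'M[R]_K) u v x : bil M (u + v) x = bil M u x + bil M v x.
Proof. by rewrite /bil !mulmxDl mxE. Qed.
Lemma bilDr K (M : 'M[R]_K) u v x : bil M x (u + v) = bil M x u + bil M x v.
Proof. by rewrite /bil linearD /= mulmxDr mxE. Qed.
Lemma bilZl K (M : 'M[R]_K) t u x : bil M (t *: u) x = t * bil M u x.
Proof. by rewrite /bil -!scalemxAl mxE. Qed.
Lemma bilZr K (M : 'M[R]_K) t u x : bil M x (t *: u) = t * bil M x u.
Proof. by rewrite /bil linearZ /= -scalemxAr mxE. Qed.

Lemma quad_ge0 (a b c : R) : 0 <= a -> (forall t, 0 <= c + 2 * t * b + t ^+ 2 * a) ->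
  b ^+ 2 <= a * c.
Proof.
move=> a0 H.
case: (ltrP 0 a) => ap.
  have := H (- b / a).
  have -> : c + 2 * (- b / a) * b + (- b / a) ^+ 2 * a = (a * c - b ^+ 2) / a.
    by field; rewrite gt_eqF.
  by rewrite ler_pdivlMr // mul0r subr_ge0.
have a00 : a = 0 by apply/eqP; rewrite eq_le ap a0.
subst a.
case: (eqVneq b 0) => [->|bn0]; first by rewrite expr0n /= mul0r.
have := H (- (c + 1) / (2 * b)).
have -> : c + 2 * (- (c + 1) / (2 * b)) * b + (- (c + 1) / (2 * b)) ^+ 2 * 0 = -1.
  by field; rewrite bn0.
by rewrite ler0N1.
Qed.


Lemma bil_cs K (M : 'M[R]_K) u x : M^T = M -> (forall z, 0 <= bil M z z) ->
  bil M u x ^+ 2 <= bil M x x * bil M u u.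
Proof.
move=> sM psd; apply: quad_ge0 => // t.
have := psd (u + t *: x).
rewrite !(bilDl, bilDr, bilZl, bilZr) (bil_sym x u sM).
set a := bil M u u; set b := bil M x u; set c := bil M x x.
suff -> : a + 2 * t * b + t ^+ 2 * c = a + t * b + (t * b + t * (t * c)) by [].
by ring.
Qed.

Lemma nrmE K (x : 'rV[R]_K) : bil 1%:M x x = \sum_j x 0 j ^+ 2.
Proof. by rewrite /bil mulmx1 mxE; apply: eq_bigr => j _; rewrite mxE expr2. Qed.

Lemma nrm_ge0 K (x : 'rV[R]_K) : 0 <= bil 1%:M x x.
Proof. by rewrite nrmE; apply: sumr_ge0 => j _; exact: sqr_ge0. Qed.

Lemma nrm_gt0 K (x : 'rV[R]_K) : x != 0 -> 0 < bil 1%:M x x.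
Proof.
move=> xn0; rewrite lt_def nrm_ge0 andbT; apply/eqP => h.
move: xn0; rewrite -[x == 0]negbK => /negP; apply; apply/negPn/eqP/matrixP => i j.
rewrite !mxE ord1; apply/eqP; rewrite -sqrf_eq0; apply/eqP.
move: h; rewrite nrmE => /psumr_eq0P; apply => // k _; exact: sqr_ge0.
Qed.

Lemma coord_le_nrm K (x : 'rV[R]_K) i : x 0 i ^+ 2 <= bil 1%:M x x.
Proof.
rewrite nrmE (bigD1 i) //= lerDl; apply: sumr_ge0 => j _; exact: sqr_ge0.
Qed.

Lemma bil_bound K (M : 'M[R]_K) y :
  `|bil M y y| <= (\sum_i \sum_j `|M i j|) * bil 1%:M y y.
Proof.
rewrite bilE mulr_suml; apply: le_trans (ler_norm_sum _ _ _) _.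
apply: ler_sum => i _; rewrite mulr_suml; apply: le_trans (ler_norm_sum _ _ _) _.
apply: ler_sum => j _.
rewrite !normrM mulrAC mulrC; apply: ler_wpM2l => //.
have h1 := coord_le_nrm y i; have h2 := coord_le_nrm y j.
have : 2 * (`|y 0 i| * `|y 0 j|) <= y 0 i ^+ 2 + y 0 j ^+ 2.
  rewrite -[y 0 i ^+ 2]real_normK ?num_real // -[y 0 j ^+ 2]real_normK ?num_real //.
  have := sqr_ge0 (`|y 0 i| - `|y 0 j|); rewrite sqrrB; lra.
lra.
Qed.

Definition ev K (j : 'I_K) : 'rV[R]_K := delta_mx 0 j.

Lemma bil_e K (N : 'M[R]_K) x j : bil N x (ev j) = (x *m N) 0 j.
Proof. by rewrite /bil /ev trmx_delta -colE mxE. Qed.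

Lemma bilB K (A : 'M[R]_K) m u v : bil (A - m%:M) u v = bil A u v - m * bil 1%:M u v.
Proof.
by rewrite /bil mulmxBr mulmxBl mul_mx_scalar mulmx1 -scalemxAl !mxE.
Qed.

Lemma bil0 K (M : 'M[R]_K) : bil M 0 0 = 0.
Proof. by rewrite /bil !mul0mx mxE. Qed.

Lemma final_contra (n b P : R) : 0 < n -> 0 <= P -> 0 <= b -> n <= P * b ->
  b * (P + 1) < n -> False.
Proof. move=> *; nra. Qed.

Lemma psd_of_eig K (A : 'M[R]_K) c : A^T = A ->
  (forall a, eigenvalue A a -> c <= a) -> forall x, c * bil 1%:M x x <= bil A x x.
Proof.
move=> sA hE x.
case: (eqVneq x 0) => [->|xn0]; first by rewrite !bil0 mulr0.
pose S : set R := fun r => exists2 z : 'rV[R]_K, z != 0 & r = bil A z z / bil 1%:M z z.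
pose L := \sum_i \sum_j `|A i j|.
have lbS : lbound S (- L).
  move=> r [z zn0 ->]; rewrite ler_pdivlMr ?nrm_gt0 //.
  by have := bil_bound A z; rewrite ler_norml mulNr => /andP[].
have hS : has_inf S.
  by split; [exists (bil A x x / bil 1%:M x x); exists x | exists (- L)].
pose m := inf S.
have m_le z : m * bil 1%:M z z <= bil A z z.
  case: (eqVneq z 0) => [->|zn0]; first by rewrite !bil0 mulr0.
  rewrite -ler_pdivlMr ?nrm_gt0 //; apply: (ge_inf hS.2); by exists z.
suff /hE cm : eigenvalue A m.
  by apply: le_trans (m_le x); apply: ler_wpM2r => //; exact: nrm_ge0.
rewrite /eigenvalue /eigenspace kermx_eq0 row_free_unit; apply/negP => Nu.
pose N := A - m%:M.
have Npsd z : 0 <= bil N z z by rewrite bilB subr_ge0.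
have sN : N^T = N by rewrite /N linearB /= tr_scalar_mx sA.
pose Ni := invmx N. pose G := Ni *m Ni^T.
pose LG := \sum_i \sum_j `|G i j|.
pose T := \sum_j bil N (ev j) (ev j).
have LG0 : 0 <= LG by apply: sumr_ge0 => i _; apply: sumr_ge0 => j _.
have T0 : 0 <= T by apply: sumr_ge0 => j _.
have key z : bil 1%:M z z <= LG * T * bil N z z.
  pose y := z *m N.
  have zy : z = y *m Ni by rewrite /y /Ni mulmxK.
  have -> : bil 1%:M z z = bil G y y.
    by rewrite /bil mulmx1 {1}zy zy trmx_mul /G !mulmxA.
  apply: le_trans (ler_norm _) _; apply: le_trans (bil_bound G y) _.
  rewrite -mulrA; apply: ler_wpM2l => //.
  rewrite nrmE /T mulr_suml; apply: ler_sum => j _.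
  have -> : y 0 j = bil N z (ev j) by rewrite bil_e.
  by apply: bil_cs.
pose P := LG * T.
have P0 : 0 <= P by rewrite mulr_ge0.
have eps0 : 0 < (P + 1)^-1 by rewrite invr_gt0; lra.
have [r [z zn0 ->]] := inf_adherent eps0 hS.
rewrite -/m ltr_pdivrMr ?nrm_gt0 // => hlt.
have nz := nrm_gt0 zn0.
have k := key z.
have hb : bil N z z * (P + 1) < bil 1%:M z z.
  rewrite bilB; move: hlt; rewrite mulrDl.
  set a := bil A z z; set n := bil 1%:M z z => hlt.
  have : a - m * n < n / (P + 1) by lra.
  by rewrite ltr_pdivlMr; lra.
move: k hb; rewrite -/P; set n := bil 1%:M z z; set b := bil N z z => k hb.
have b0 : 0 <= b := Npsd z.
exact: (final_contra nz P0 b0 k hb).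
Qed.


Lemma eig_col n K (H : 'M[R]_n) (V : 'M[R]_(n, K)) d : eig_decomp H V d ->
  forall i k, V i k = (H *m V) i k / d 0 k.
Proof.
case=> eH eV _ dn0 i k.
have -> : H *m V = V *m diag_mx d by rewrite eH -!mulmxA eV mulmx1.
rewrite mul_mx_diag mxE mulfK //.
by have := dn0 k; rewrite normr_gt0.
Qed.

Lemma col_sq n K (V : 'M[R]_(n, K)) : V^T *m V = 1%:M -> forall k, \sum_l V l k ^+ 2 = 1.
Proof.
move=> eV k; have := congr1 (fun M : 'M[R]_K => M k k) eV; rewrite /= !mxE eqxx /=.
move=> h; apply: etrans h; apply: eq_bigr => l _; by rewrite mxE expr2.
Qed.

Lemma bil_gram n K (X : 'M[R]_(n, K)) u :
  bil (X^T *m X) u u = \sum_l ((X *m u^T) l 0) ^+ 2.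
Proof.
rewrite /bil !mulmxA -[u *m X^T *m X *m u^T]mulmxA.
have -> : u *m X^T = (X *m u^T)^T by rewrite trmx_mul trmxK.
by rewrite mxE; apply: eq_bigr => l _; rewrite mxE expr2.
Qed.

Lemma abs_le_sqrt (x y : R) : 0 < y -> x ^+ 2 * y <= 1 -> `|x| <= (Num.sqrt y)^-1.
Proof.
move=> y0 h; rewrite -sqrtr_sqr -sqrtrV; last exact: ltW y0.
apply: ler_wsqrtr.
by rewrite -ler_pdivlMr // mul1r in h.
Qed.

Lemma convex_bound K (p f : 'I_K -> R) s : (forall j, 0 <= p j) -> \sum_j p j = 1 ->
  (forall j, `|f j| <= s) -> `|\sum_j p j * f j| <= s.
Proof.
move=> p0 p1 hf; apply: le_trans (ler_norm_sum _ _ _) _.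
have -> : s = \sum_j p j * s by rewrite -mulr_suml p1 mul1r.
apply: ler_sum => j _; rewrite normrM ger0_norm //; exact: ler_wpM2l.
Qed.

Lemma pure_sum K (p f : 'I_K -> R) j : (forall j, 0 <= p j) -> \sum_j p j = 1 ->
  p j = 1 -> \sum_j' p j' * f j' = f j.
Proof.
move=> p0 p1 pj; rewrite (bigD1 j) //= pj mul1r big1 ?addr0 // => j' nj.
move: p1; rewrite (bigD1 j) //= pj -{2}[1]addr0 => /addrI /eqP.
by rewrite psumr_eq0 // => /allP /(_ j') ; rewrite mem_index_enum nj => /(_ isT) /eqP ->; rewrite mul0r.
Qed.

Lemma sq_le_aux (ti tl c x : R) : 0 <= ti -> ti <= c * tl ->
  (ti * x) ^+ 2 <= c ^+ 2 * (tl * x) ^+ 2.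
Proof.
move=> h0 h.
have e1 : (ti * x) ^+ 2 = ti ^+ 2 * x ^+ 2 by rewrite exprMn.
have e2 : c ^+ 2 * (tl * x) ^+ 2 = (c * tl) ^+ 2 * x ^+ 2 by rewrite !exprMn mulrA.
rewrite e1 e2; apply: ler_wpM2r; first exact: sqr_ge0.
by rewrite ler_sqr ?nnegrE // (le_trans h0 h).
Qed.

Lemma sum_sub_le n (A : {set 'I_n}) (f : 'I_n -> R) : (forall l, 0 <= f l) ->
  \sum_(l in A) f l <= \sum_l f l.
Proof.
move=> f0; rewrite big_mkcond /=; apply: ler_sum => l _; case: ifP => // _.
Qed.

End Psd.

Theorem lemma7 (R : realType) (K : nat) :
  (* Mixed membership model with (C1) and (C2) *)
  (forall (n0 : nat) (theta : nat -> R) (Pi : forall n : nat, 'M[R]_(n, K))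
          (P : nat -> 'M[R]_K) (zdiag : nat -> bool)
          (V : forall n : nat, 'M[R]_(n, K)) (d : nat -> 'rV[R]_K)
          (c0 c0' c1 : R),
      (forall n, (n0 <= n)%N ->
         [/\ prob_rows (Pi n), mean_ok (mm_mean (theta n) (Pi n) (P n)) (P n)
           & eig_decomp (mm_mean (theta n) (Pi n) (P n)) (V n) (d n)]) ->
      cond_C1 c0 n0 d (fun n => alpha (mm_mean (theta n) (Pi n) (P n)) (zdiag n)) ->
      (* (C2) *)
      0 < c0' < 1 -> 0 < c1 < 1 ->
      (forall n, (n0 <= n)%N ->
         [/\ lambdaK_ge ((Pi n)^T *m Pi n) (c0' * n%:R),
             lambdaK_ge (P n) c0'
           & (n%:R) `^ (- c1) <= theta n]) ->
      exists C : R, 0 < C /\ exists N : nat, forall n, (N <= n)%N ->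
        forall (i : 'I_n) (k : 'I_K), `|V n i k| <= C / Num.sqrt (n%:R))
  /\
  (* Degree-corrected mixed membership model with (C1) and (C4) *)
  (forall (n0 : nat) (theta : forall n : nat, 'rV[R]_n)
          (Pi : forall n : nat, 'M[R]_(n, K))
          (P : nat -> 'M[R]_K) (zdiag : nat -> bool)
          (V : forall n : nat, 'M[R]_(n, K)) (d : nat -> 'rV[R]_K)
          (c0 c2 c3 c4 : R),
      (forall n, (n0 <= n)%N ->
         [/\ (forall l : 'I_n, 0 < theta n 0 l), prob_rows (Pi n),
             mean_ok (dcmm_mean (theta n) (Pi n) (P n)) (P n)
           & eig_decomp (dcmm_mean (theta n) (Pi n) (P n)) (V n) (d n)]) ->
      cond_C1 c0 n0 d (fun n => alpha (dcmm_mean (theta n) (Pi n) (P n)) (zdiag n)) ->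
      (* (C4) *)
      0 < c2 < 1 -> 0 < c3 < 1 -> 0 < c4 ->
      (forall n, (n0 <= n)%N ->
         [/\ (forall k : 'I_K, c2 * n%:R <= (#|pure_nodes (Pi n) k|)%:R),
             (forall l m : 'I_n, theta n 0 l <= c4 * theta n 0 m)
           & (forall l : 'I_n, (n%:R) `^ (- c3) <= theta n 0 l ^+ 2)]) ->
      exists C : R, 0 < C /\ exists N : nat, forall n, (N <= n)%N ->
        forall (i : 'I_n) (k : 'I_K), `|V n i k| <= C / Num.sqrt (n%:R)).

Proof.
split.
- move=> n0 theta Pi P zdiag V d c0 c0' c1 hmod hC1 /andP[c0p _] _ hC2.
  exists (Num.sqrt c0')^-1; split; first by rewrite invr_gt0 sqrtr_gt0.
  exists n0 => n hn i k.
  have [hprob [_ _ _ _] heig] := hmod n hn.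
  have [hPi _ _] := hC2 n hn.
  have np : (0 < n)%N by case: n i {hn hmod hC2 hprob heig hPi} => [[]|].
  have nR : 0 < n%:R :> R by rewrite ltr0n.
  pose W := theta n *: (P n *m (Pi n)^T *m V n).
  have HV : mm_mean (theta n) (Pi n) (P n) *m V n = Pi n *m W.
    by rewrite /mm_mean /W -scalemxAl -scalemxAr !mulmxA.
  pose b : 'rV[R]_K := \row_j (W j k / d n 0 k).
  have Vb l : V n l k = \sum_j Pi n l j * b 0 j.
    rewrite (eig_col heig) HV mxE mulr_suml; apply: eq_bigr => j _.
    have bE : b 0 j = W j k / d n 0 k by rewrite /b mxE.
    have WE : W j k = theta n * (P n *m (Pi n)^T *m V n) j k by rewrite /W mxE.
    by rewrite bE mulrA.
  have hb : bil ((Pi n)^T *m Pi n) b b = 1.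
    rewrite bil_gram -(col_sq (let: And4 _ eV _ _ := heig in eV) k); apply: eq_bigr => l _.
    rewrite Vb mxE; congr (_ ^+ 2); apply: eq_bigr => j _; by rewrite mxE.
  have hpsd := psd_of_eig (c := c0' * n%:R) _ hPi b.
  rewrite hb in hpsd.
  have sym : ((Pi n)^T *m Pi n)^T = (Pi n)^T *m Pi n by rewrite trmx_mul trmxK.
  have {}hpsd := hpsd sym.
  have hbj j : `|b 0 j| <= (Num.sqrt c0')^-1 / Num.sqrt n%:R.
    rewrite -invfM -sqrtrM; last exact: ltW.
    apply: abs_le_sqrt; first exact: mulr_gt0.
    apply: le_trans hpsd; rewrite mulrC; apply: ler_wpM2l; first by rewrite mulr_ge0 // ltW.
    exact: coord_le_nrm.
  rewrite Vb; have [p0 p1] := hprob i.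
  exact: convex_bound.
- move=> n0 theta Pi P zdiag V d c0 c2 c3 c4 hmod hC1 /andP[c2p _] _ c4p hC4.
  exists (c4 * (Num.sqrt c2)^-1); split; first by rewrite mulr_gt0 // invr_gt0 sqrtr_gt0.
  exists n0 => n hn i k.
  have [thp hprob [_ _ _ _] heig] := hmod n hn.
  have [hN hth _] := hC4 n hn.
  have np : (0 < n)%N by case: n i {hn hmod hC4 hprob heig hN hth thp} => [[]|].
  have nR : 0 < n%:R :> R by rewrite ltr0n.
  pose W := P n *m (Pi n)^T *m diag_mx (theta n) *m V n.
  have HV : dcmm_mean (theta n) (Pi n) (P n) *m V n = diag_mx (theta n) *m (Pi n *m W).
    by rewrite /dcmm_mean /W !mulmxA.
  pose b j := W j k / d n 0 k.
  have Vb l : V n l k = theta n 0 l * \sum_j Pi n l j * b j.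
    rewrite (eig_col heig) HV mul_diag_mx mxE mxE -mulrA mulr_suml; congr (_ * _).
    by apply: eq_bigr => j _; rewrite mulrA.
  clearbody b.
  have hbj j : `|theta n 0 i * b j| <= c4 * (Num.sqrt c2)^-1 / Num.sqrt n%:R.
    pose A := pure_nodes (Pi n) j.
    have hA : \sum_(l in A) (theta n 0 l * b j) ^+ 2 <= 1.
      rewrite -(col_sq (let: And4 _ eV _ _ := heig in eV) k).
      apply: (le_trans _ (sum_sub_le A (fun l => sqr_ge0 (V n l k)))).
      apply: ler_sum => l lA.
      have pj : Pi n l j = 1 by move: lA; rewrite inE => /eqP.
      have [p0 p1] := hprob l.
      by rewrite Vb (pure_sum b p0 p1 pj).
    have hA2 : (#|A|%:R * (theta n 0 i * b j) ^+ 2) <= c4 ^+ 2.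
      rewrite mulr_natl -sumr_const.
      apply: (le_trans (_ : _ <= \sum_(l in A) c4 ^+ 2 * (theta n 0 l * b j) ^+ 2)).
        apply: ler_sum => l _; apply: sq_le_aux; [exact: ltW | exact: hth].
      rewrite -mulr_sumr; apply: le_trans (ler_wpM2l (sqr_ge0 c4) hA) _.
      by rewrite mulr1.
    set x := theta n 0 i * b j.
    have hx : (x / c4) ^+ 2 * (c2 * n%:R) <= 1.
      have -> : (x / c4) ^+ 2 * (c2 * n%:R) = (x ^+ 2 * (c2 * n%:R)) / c4 ^+ 2.
        by field; rewrite gt_eqF.
      rewrite ler_pdivrMr ?exprn_gt0 // mul1r.
      apply: le_trans hA2; rewrite mulrC; apply: ler_wpM2r; first exact: sqr_ge0.
      exact: hN.
    have := abs_le_sqrt (mulr_gt0 c2p nR) hx.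
    have e : c4 * (Num.sqrt c2)^-1 / Num.sqrt n%:R = c4 * (Num.sqrt (c2 * n%:R))^-1.
      by rewrite sqrtrM ?ltW // invfM mulrA.
    rewrite e -ler_pdivrMl // => h; apply: le_trans h.
    by rewrite (normrM x (c4^-1)) normfV (gtr0_norm c4p) mulrC.
  rewrite Vb mulr_sumr.
  have [p0 p1] := hprob i.
  rewrite (eq_bigr (fun j => Pi n i j * (theta n 0 i * b j))); last first.
    by move=> j _; rewrite mulrCA.
  exact: convex_bound.
Qed.
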